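(* Let $G$ be a group of order $9$ acting on $\mathbb P^1\times\mathbb P^1\times\mathbb P^1$ (over $\mathbb C$) such that the action is free outside a finite subset. If $G$ permutes the three factors of $\mathbb P^1\times\mathbb P^1\times\mathbb P^1$ nontrivially, then $G\cong\mathbb Z_9$ and there are affine coordinates $x,y,z$ on the three copies of $\mathbb P^1$ such that a generator $g$ of $G$ acts by $g\colon(x,y,z)\mapsto(y,z,\omega x)$, where $\omega$ is a primitive cube root of $1$.
   Context: The action is by automorphisms; ''free outside a finite subset'' means that the set of points with nontrivial stabilizer is finite. Any automorphism of $\mathbb P^1\times\mathbb P^1\times\mathbb P^1$ permutes the three projections, giving a homomorphism to the symmetric group $S_3$; ''permutes the factors nontrivially'' means this homomorphism is nontrivial on $G$. *)

(* Defs.v *)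
From HB Require Import structures.
From mathcomp Require Import all_boot all_order all_algebra all_fingroup all_solvable.
From mathcomp Require Import reals complex.
Set Implicit Arguments. Unset Strict Implicit. Unset Printing Implicit Defensive.
Import GRing.Theory.
Local Open Scope ring_scope.

(* The projective line over a field F : None is the point at infinity,
   Some x is the point with affine coordinate x. *)
Definition P1 (F : fieldType) := option F.

Definition P1cube (F : fieldType) := {ffun 'I_3 -> option F}.

Definition mob (F : fieldType) (A : 'M[F]_2) (p : option F) : option F :=
  let a := A ord0 ord0 in let b := A ord0 ord_max in
  let c := A ord_max ord0 in let d := A ord_max ord_max in
  match p with
  | Some x => if c * x + d == 0 then None else Some ((a * x + b) / (c * x + d))
  | None => if c == 0 then None else Some (a / c)
  end.

(* Every automorphism of (P^1)^3 is of this
   form (Aut = PGL_2^3 x| S_3); sigma is uniquely determined by f and gives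
   the homomorphism Aut((P^1)^3) -> S_3. *)
Definition aut_with_perm (F : fieldType) (f : P1cube F -> P1cube F)
  (sigma : 'S_3) : Prop :=
  exists M : 'I_3 -> 'M[F]_2,
    (forall i, M i \in unitmx) /\
    forall p : P1cube F, f p = [ffun i => mob (M i) (p (sigma i))].

Definition is_aut (F : fieldType) (f : P1cube F -> P1cube F) : Prop :=
  exists sigma, aut_with_perm f sigma.

Definition is_aut_action (F : fieldType) (gT : finGroupType) (G : {group gT})
  (act : gT -> P1cube F -> P1cube F) : Prop :=
  (forall g, g \in G -> is_aut (act g)) /\
  (forall p, act 1%g p = p) /\
  (forall g h, g \in G -> h \in G -> forall p, act (g * h)%g p = act g (act h p)).

Definition free_outside_finite (F : fieldType) (gT : finGroupType)
  (G : {group gT}) (act : gT -> P1cube F -> P1cube F) : Prop :=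
  exists s : seq (P1cube F),
    forall p, (exists2 g, g \in G & (g != 1)%g /\ act g p = p) -> p \in s.

Definition permutes_factors_nontrivially (F : fieldType) (gT : finGroupType)
  (G : {group gT}) (act : gT -> P1cube F -> P1cube F) : Prop :=
  exists2 g, g \in G & exists sigma : 'S_3, sigma != 1%g /\ aut_with_perm (act g) sigma.

Definition coord_change (F : fieldType) (N : 'I_3 -> 'M[F]_2) (p : P1cube F) : P1cube F :=
  [ffun i => mob (N i) (p i)].

Definition model_map (F : fieldType) (w : F) (p : P1cube F) : P1cube F :=
  [ffun i : 'I_3 =>
     if val i == 0%N then p (inord 1)
     else if val i == 1%N then p (inord 2)
     else mob (\matrix_(k < 2, l < 2) (if (val k == 0%N) && (val l == 0%N) then w
                                      else if (val k == 1%N) && (val l == 1%N) then 1 else 0))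
              (p (inord 0))].

(* Main.v *)
Require Import Defs.
From HB Require Import structures.
From mathcomp Require Import all_boot all_order all_algebra all_fingroup all_solvable.
From mathcomp Require Import reals complex.
From mathcomp Require Import ring.
Set Implicit Arguments. Unset Strict Implicit. Unset Printing Implicit Defensive.

Definition i0 : 'I_3 := @Ordinal 3 0 isT.
Definition i1 : 'I_3 := @Ordinal 3 1 isT.
Definition i2 : 'I_3 := @Ordinal 3 2 isT.
Definition cyc (i : 'I_3) : 'I_3 := Ordinal (ltn_pmod i.+1 (isT : 0 < 3)).

Lemma ord3_cases (i : 'I_3) : [\/ i = i0, i = i1 | i = i2].
Proof.
case: i => [[|[|[|m]]] Hi]; last by [].
- by constructor 1; apply: val_inj.
- by constructor 2; apply: val_inj.
- by constructor 3; apply: val_inj.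
Qed.

Lemma cyc0 : cyc i0 = i1. Proof. exact: val_inj. Qed.
Lemma cyc1 : cyc i1 = i2. Proof. exact: val_inj. Qed.
Lemma cyc2 : cyc i2 = i0. Proof. exact: val_inj. Qed.

Lemma cyc3 i : cyc (cyc (cyc i)) = i.
Proof. by case: (ord3_cases i) => ->; do ?[rewrite cyc0|rewrite cyc1|rewrite cyc2]. Qed.

Lemma cyc_all x i : [\/ x = i, x = cyc i | x = cyc (cyc i)].
Proof.
by case: (ord3_cases i) => ->; case: (ord3_cases x) => ->;
  do ?[rewrite cyc0|rewrite cyc1|rewrite cyc2]; [constructor 1|constructor 2|constructor 3|..];
  first [by constructor 1| by constructor 2|by constructor 3].
Qed.

Lemma cyc_neq i : [/\ cyc i != i, cyc (cyc i) != i & cyc (cyc i) != cyc i].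
Proof. by case: (ord3_cases i) => ->; do ?[rewrite cyc0|rewrite cyc1|rewrite cyc2]. Qed.

Lemma perm3 (s : 'I_3 -> 'I_3) : (forall i, s (s (s i)) = i) -> (exists i, s i != i) ->
  (forall i, s i = cyc i) \/ (forall i, s i = cyc (cyc i)).
Proof.
move=> s3 [i si].
set j := s i in si; set k := s j.
have kj : k != j.
  apply/eqP => e; move: (s3 i); rewrite -/j -/k e -/k e => e'.
  by move: si; rewrite e' eqxx.
have ki : k != i.
  apply/eqP => e; move: (s3 i); rewrite -/j -/k e -/j => e'.
  by move: si; rewrite e' eqxx.
have sk : s k = i by exact: s3.
have [c1 c2 c3] := cyc_neq i.
have [ji|jc|jcc] := cyc_all j i.
- by move: si; rewrite ji eqxx.
- left => x; have [e|e|e] := cyc_all k i.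
  + by rewrite e eqxx in ki.
  + by rewrite e -jc eqxx in kj.
  have [->|->|->] := cyc_all x i.
  + by [].
  + by rewrite -jc /= -/k e jc.
  + by rewrite -e sk e cyc3.
- right => x; have [e|e|e] := cyc_all k i.
  + by rewrite e eqxx in ki.
  2: by rewrite e -jcc eqxx in kj.
  have [->|->|->] := cyc_all x i.
  + by [].
  + by rewrite -e sk e cyc3.
  + by rewrite -jcc -/k e jcc cyc3.
Qed.

Import GRing.Theory Num.Theory.
Local Open Scope ring_scope.

Section Mob.
Variable F : fieldType.
Implicit Types A B : 'M[F]_2.

Notation o0 := (ord0 : 'I_2).
Notation o1 := (ord_max : 'I_2).

Lemma det2 A : \det A = A o0 o0 * A o1 o1 - A o0 o1 * A o1 o0.
Proof.
rewrite (expand_det_row _ ord0) !big_ord_recl big_ord0 addr0 /cofactor !det_mx11 !mxE /=.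
have -> : lift ord0 ord0 = o1 :> 'I_2 by apply: val_inj.
rewrite expr0 expr1 mul1r mulN1r.
have -> : lift ord_max (0 : 'I_1) = o0 :> 'I_2 by apply: val_inj.
by rewrite mulrN.
Qed.

Lemma mul2E A B i j : (A *m B) i j = A i o0 * B o0 j + A i o1 * B o1 j.
Proof.
rewrite mxE !big_ord_recl big_ord0 addr0.
by have -> : lift ord0 ord0 = o1 :> 'I_2 by apply: val_inj.
Qed.

Lemma unit2 A : (A \in unitmx) = (A o0 o0 * A o1 o1 - A o0 o1 * A o1 o0 != 0).
Proof. by rewrite unitmxE unitfE det2. Qed.

Definition proj (u v : F) : option F := if v == 0 then None else Some (u / v).
Definition liftp (x : option F) : F * F :=
  match x with Some x => (x, 1) | None => (1, 0) end.

Lemma mobE A x : mob A x =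
  proj (A o0 o0 * (liftp x).1 + A o0 o1 * (liftp x).2)
       (A o1 o0 * (liftp x).1 + A o1 o1 * (liftp x).2).
Proof.
case: x => [x|] /=; rewrite /proj ?mulr1 ?mulr0 ?addr0 //.
Qed.

Lemma aux (a b c d u v : F) : v != 0 ->
  (if c * (u/v) + d == 0 then None else Some ((a*(u/v)+b)/(c*(u/v)+d))) =
  (if c*u + d*v == 0 then None else Some ((a*u+b*v)/(c*u+d*v))).
Proof.
move=> v0.
have -> : c * (u / v) + d = (c * u + d * v) / v by field.
rewrite mulf_eq0 invr_eq0 (negbTE v0) orbF.
case: eqP => // /eqP h; congr Some.
by field; rewrite h v0.
Qed.

Lemma mob_proj A u v : (u != 0) || (v != 0) ->
  mob A (proj u v) = proj (A o0 o0 * u + A o0 o1 * v) (A o1 o0 * u + A o1 o1 * v).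
Proof.
move=> nz; rewrite /proj /mob.
have [v0|v0] := eqVneq v 0.
  move: nz; rewrite v0 eqxx orbF => u0.
  rewrite !mulr0 !addr0 mulf_eq0 (negbTE u0) orbF.
  by case: eqP => // /eqP c0; congr Some; field; rewrite u0 c0.
exact: aux.
Qed.

Lemma nz_img B u v : B \in unitmx -> (u != 0) || (v != 0) ->
  (B o0 o0 * u + B o0 o1 * v != 0) || (B o1 o0 * u + B o1 o1 * v != 0).
Proof.
rewrite unit2 => dB nz; apply: contraTT nz.
rewrite negb_or !negbK => /andP[/eqP e1 /eqP e2].
set d := _ - _ in dB.
have hu : d * u = B o1 o1 * (B o0 o0 * u + B o0 o1 * v) - B o0 o1 * (B o1 o0 * u + B o1 o1 * v).
  by rewrite /d; ring.
have hv : d * v = B o0 o0 * (B o1 o0 * u + B o1 o1 * v) - B o1 o0 * (B o0 o0 * u + B o0 o1 * v).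
  by rewrite /d; ring.
rewrite e1 e2 !mulr0 subr0 in hu hv.
move/eqP: hu; move/eqP: hv; rewrite !mulf_eq0 (negbTE dB) /= => -> ->.
by [].
Qed.

Lemma liftp_nz (x : option F) : ((liftp x).1 != 0) || ((liftp x).2 != 0).
Proof. by case: x => [x|] /=; rewrite oner_eq0 ?orbT. Qed.

Lemma mob_comp A B x : B \in unitmx -> mob A (mob B x) = mob (A *m B) x.
Proof.
move=> uB; rewrite (mobE B x) mob_proj; last exact: nz_img (liftp_nz x).
rewrite (mobE (A *m B)) !mul2E; congr proj; ring.
Qed.

Lemma mob1 x : mob (1%:M : 'M[F]_2) x = x.
Proof.
rewrite mobE !mxE /=; case: x => [x|] /=; rewrite /proj /= ?oner_eq0 ?eqxx /=.
  by rewrite mul0r mulr1 add0r oner_eq0 mul1r mul0r addr0 divr1.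
by rewrite mulr0 mul0r addr0 eqxx.
Qed.

Lemma mob_inj A : A \in unitmx -> injective (mob A).
Proof.
move=> uA x y e.
by rewrite -(mob1 x) -(mob1 y) -(mulVmx uA) -!mob_comp // e.
Qed.
End Mob.

Notation o0 := (ord0 : 'I_2).
Notation o1 := (ord_max : 'I_2).

Definition mx22 (F : fieldType) (a b c d : F) : 'M[F]_2 :=
  \matrix_(i, j) (if i == o0 then (if j == o0 then a else b) else (if j == o0 then c else d)).

Lemma mx22E (F : fieldType) (a b c d : F) :
  [/\ mx22 a b c d o0 o0 = a, mx22 a b c d o0 o1 = b,
      mx22 a b c d o1 o0 = c & mx22 a b c d o1 o1 = d].
Proof. by rewrite !mxE. Qed.

Definition Wm (F : fieldType) (w : F) : 'M[F]_2 :=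
  \matrix_(k < 2, l < 2) (if (val k == 0%N) && (val l == 0%N) then w
                          else if (val k == 1%N) && (val l == 1%N) then 1 else 0).

Lemma WmE (F : fieldType) (w : F) :
  [/\ Wm w o0 o0 = w, Wm w o0 o1 = 0, Wm w o1 o0 = 0 & Wm w o1 o1 = 1].
Proof. by rewrite !mxE. Qed.

Lemma proj_scale (F : fieldType) (k u v : F) : k != 0 -> proj (k * u) (k * v) = proj u v.
Proof.
move=> k0; rewrite /proj mulf_eq0 (negbTE k0) /=.
by case: eqP => // /eqP v0; congr Some; field; rewrite k0 v0.
Qed.

Lemma mob_prop (F : fieldType) (A B : 'M[F]_2) (k : F) : k != 0 ->
  (forall i j, A i j = k * B i j) -> forall t, mob A t = mob B t.
Proof.
move=> k0 h t; rewrite !mobE !h; symmetry; rewrite -(proj_scale _ _ k0); congr proj; ring.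
Qed.

Lemma prim3 (F : numFieldType) (w : F) : w ^+ 2 + w + 1 = 0 -> 3.-primitive_root w.
Proof.
move=> h.
have w3 : w ^+ 3 = 1.
  apply/eqP; rewrite -subr_eq0; apply/eqP.
  transitivity ((w - 1) * (w ^+ 2 + w + 1)); first by ring.
  by rewrite h mulr0.
have [m pm dm] := prim_order_exists (isT : (0 < 3)%N) w3.
have m0 : (0 < m)%N by case/andP: pm.
have : (m <= 3)%N by exact: dvdn_leq.
case: m pm dm m0 => [|[|[|[|m]]]] // pm _ _ _.
have w1 : w = 1 by have := prim_expr_order pm; rewrite expr1.
move: h; rewrite w1 expr1n => /eqP; rewrite (_ : 1 + 1 + 1 = 3%:R :> F) ?pnatr_eq0 //.
by rewrite -!natr1 /= add0r.
Qed.

Lemma ord2_cases (i : 'I_2) : i = o0 \/ i = o1.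
Proof. by case: i => [[|[|m]] Hi]; [left|right|]; try apply: val_inj. Qed.

Lemma mob_id_entries (F : fieldType) (A : 'M[F]_2) : (forall t, mob A t = t) ->
  [/\ A o1 o0 = 0, A o0 o1 = 0, A o0 o0 = A o1 o1 & A o1 o1 != 0].
Proof.
move=> h.
have h1 := h None; rewrite /mob in h1; move: h1; case: eqP => // c0 _.
have h2 := h (Some 0); rewrite /mob !mulr0 !add0r in h2; move: h2.
case: eqP => // /eqP d0 [] /eqP; rewrite mulf_eq0 invr_eq0 (negbTE d0) orbF => /eqP b0.
have h3 := h (Some 1); rewrite /mob !mulr1 c0 b0 add0r addr0 (negbTE d0) in h3.
case: h3 => e; split => //.
by rewrite -(divfK d0 (A o0 o0)) e mul1r.
Qed.

Lemma mob_scalar (F : fieldType) (A : 'M[F]_2) : A o1 o0 = 0 -> A o0 o1 = 0 ->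
  A o0 o0 = A o1 o1 -> A o1 o1 != 0 -> forall t, mob A t = t.
Proof.
move=> c0 b0 ad d0 [t|]; rewrite /mob c0 ?eqxx //.
by rewrite mul0r add0r (negbTE d0) b0 addr0 ad mulrAC divff // mul1r.
Qed.

Lemma sub0_eq (F : comNzRingType) (x y z k : F) : z = 0 -> x - y = z * k -> x = y.
Proof. by move=> -> /eqP; rewrite mul0r subr_eq0 => /eqP. Qed.

Lemma eigen3 (C : numClosedFieldType) (D : 'M[C]_2) : D \in unitmx ->
  (forall t, mob D (mob D (mob D t)) = t) -> ~ (forall t, mob D t = t) ->
  exists (w : C) (P : 'M[C]_2), [/\ 3.-primitive_root w, P \in unitmx &
    forall t, mob D (mob P t) = mob P (mob (Wm w) t)].
Proof.
move=> uD E3' nid.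
have E3 : forall t, mob (D *m (D *m D)) t = t.
  by move=> t; rewrite -mob_comp ?unitmx_mul ?uD // -mob_comp // E3'.
have dD := uD; rewrite unit2 in dD.
have [e10 e01 e00 _] := mob_id_entries E3.
move: e10 e01 e00; rewrite !mul2E.
move: dD nid; set a := D o0 o0; set b := D o0 o1; set c := D o1 o0; set d := D o1 o1.
move=> dD nid e10 e01 e00.
set k := (a + d) ^+ 2 - (a * d - b * c).
have k0 : k = 0.
  apply/eqP; apply/negP => /negP k0; apply: nid.
  have b0 : b = 0.
    have : b * k = 0 by rewrite -e01 /k; ring.
    by move/eqP; rewrite mulf_eq0 (negbTE k0) orbF => /eqP.
  have c0 : c = 0.
    have : c * k = 0 by rewrite -e10 /k; ring.
    by move/eqP; rewrite mulf_eq0 (negbTE k0) orbF => /eqP.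
  have ad : a = d.
    have : (a - d) * k = 0.
      by move/eqP: e00; rewrite -subr_eq0 => /eqP <-; rewrite /k; ring.
    by move/eqP; rewrite mulf_eq0 (negbTE k0) orbF subr_eq0 => /eqP.
  apply: mob_scalar => //.
  by move: dD; rewrite b0 mul0r subr0 mulf_eq0 negb_or => /andP[].
have two : (2%:R : C) != 0 by rewrite pnatr_eq0.
have four : (4%:R : C) != 0 by rewrite pnatr_eq0.
case: (eqVneq b 0) => [b0|b0].
- have [a0 d0] : a != 0 /\ d != 0.
    by move: dD; rewrite b0 mul0r subr0 mulf_eq0 negb_or => /andP[].
  have q : a ^+ 2 + a * d + d ^+ 2 = 0 by rewrite -k0 /k b0; ring.
  have amd : a - d != 0.
    apply/negP => /eqP e.
    have ad : a = d by apply/eqP; rewrite -subr_eq0 e.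
    have e3 : d ^+ 2 + d * d + d ^+ 2 = 3%:R * d ^+ 2 by ring.
    move: q; rewrite ad e3 => /eqP.
    by rewrite mulf_eq0 pnatr_eq0 expf_eq0 (negbTE d0) andbF.
  have uP : mx22 (a - d) 0 c 1 \in unitmx.
    by rewrite unit2; have [-> -> -> ->] := mx22E (a - d) 0 c 1; rewrite mulr1 mul0r subr0.
  have uW : Wm (a / d) \in unitmx.
    rewrite unit2; have [-> -> -> ->] := WmE (a / d).
    by rewrite mulr1 mul0r subr0 mulf_neq0 // invr_eq0.
  exists (a / d), (mx22 (a - d) 0 c 1); split => //.
  + apply: prim3.
    have -> : (a / d) ^+ 2 + a / d + 1 = (a ^+ 2 + a * d + d ^+ 2) / d ^+ 2 by field.
    by rewrite q mul0r.
  + move=> t; rewrite !mob_comp //.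
    apply: (mob_prop (k := d)) => // i j.
    rewrite !mul2E.
    by case: (ord2_cases i) => ->; case: (ord2_cases j) => ->; rewrite !mxE /= -/a -/b -/c -/d ?b0; field.
- have kd : (a + d) ^+ 2 = a * d - b * c by move/eqP: k0; rewrite /k subr_eq0 => /eqP.
  set de := a * d - b * c in dD kd.
  set s := sqrtC ((a + d) ^+ 2 - 4%:R * de).
  have hs : s ^+ 2 = (a + d) ^+ 2 - 4%:R * de := sqrtCK _.
  have s0 : s != 0.
    apply/negP => /eqP s0; move: hs; rewrite s0 expr0n /= kd => /eqP.
    have -> : de - 4%:R * de = - (3%:R * de) by ring.
    by rewrite eq_sym oppr_eq0 mulf_eq0 pnatr_eq0 (negbTE dD).
  set m1 := (a + d + s) / 2%:R; set m2 := (a + d - s) / 2%:R.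
  have hsum : a + d = m1 + m2 by rewrite /m1 /m2; field.
  have hprod : de = m1 * m2.
    apply: (sub0_eq (z := s ^+ 2 - ((a + d) ^+ 2 - 4%:R * de)) (k := 4%:R^-1)).
      by rewrite hs subrr.
    by rewrite /m1 /m2; field.
  have [m10 m20] : m1 != 0 /\ m2 != 0.
    by move: dD; rewrite hprod mulf_eq0 negb_or => /andP[].
  have chi1 : m1 ^+ 2 - (a + d) * m1 + de = 0 by rewrite hsum hprod; ring.
  have chi2 : m2 ^+ 2 - (a + d) * m2 + de = 0 by rewrite hsum hprod; ring.
  have uP : mx22 b b (m1 - a) (m2 - a) \in unitmx.
    rewrite unit2; have [-> -> -> ->] := mx22E b b (m1 - a) (m2 - a).
    have -> : b * (m2 - a) - b * (m1 - a) = - (b * s) by rewrite /m1 /m2; field.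
    by rewrite oppr_eq0 mulf_neq0.
  have uW : Wm (m1 / m2) \in unitmx.
    rewrite unit2; have [-> -> -> ->] := WmE (m1 / m2).
    by rewrite mulr1 mul0r subr0 mulf_neq0 // invr_eq0.
  exists (m1 / m2), (mx22 b b (m1 - a) (m2 - a)); split => //.
  + apply: prim3.
    have -> : (m1 / m2) ^+ 2 + m1 / m2 + 1 = ((a + d) ^+ 2 - de) / m2 ^+ 2.
      by rewrite hsum hprod; field.
    by rewrite kd subrr mul0r.
  + move=> t; rewrite !mob_comp //.
    apply: (mob_prop (k := m2)) => // i j.
    rewrite !mul2E.
    case: (ord2_cases i) => ->; case: (ord2_cases j) => ->; rewrite !mxE /= -/a -/b -/c -/d.
    * by field.
    * by field.
    * by apply: (sub0_eq (k := -1) chi1); rewrite /de; field.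
    * by apply: (sub0_eq (k := -1) chi2); rewrite /de; field.
Qed.

Lemma L_inf (T : eqType) (f : nat -> T) (s : seq T) : injective f -> exists n, f n \notin s.
Proof.
move=> injf.
case: (boolP (all (fun n => f n \in s) (iota 0 (size s).+1))) => [/allP H|].
  have U : uniq (map f (iota 0 (size s).+1)) by rewrite map_inj_uniq // iota_uniq.
  have sub : {subset map f (iota 0 (size s).+1) <= s}.
    by move=> x /mapP [n Hn ->]; exact: H.
  by have := uniq_leq_size U sub; rewrite size_map size_iota ltnn.
by rewrite -has_predC => /hasP [n _ Hn]; exists n.
Qed.

Lemma L_fix (F : numFieldType) (gT : finGroupType) (G : {group gT})
  (act : gT -> P1cube F -> P1cube F) h (pt : option F -> P1cube F) :
  free_outside_finite G act -> h \in G -> (h != 1)%g -> injective pt ->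
  (forall t, act h (pt t) = pt t) -> False.
Proof.
move=> [s Hs] hG h1 ipt fx.
have inj : injective (fun n : nat => pt (Some (n%:R : F))).
  by move=> m n /ipt [] /eqP; rewrite eqr_nat => /eqP.
have [n Hn] := L_inf s inj.
by move: Hn; rewrite Hs //; exists h.
Qed.

Lemma L_dep (F : fieldType) (f : P1cube F -> P1cube F) (s : 'I_3 -> 'I_3)
  (Phi : 'I_3 -> option F -> option F) :
  (forall p i, f p i = Phi i (p (s i))) -> (forall p, f p = p) -> forall i, s i = i.
Proof.
move=> Hf Hid i; apply/eqP/negPn/negP => ne.
have h1 := Hf [ffun l => if l == i then Some 0 else None] i.
have h2 := Hf [ffun l => None] i.
rewrite !Hid !ffunE eqxx (negbTE ne) in h1 h2.
by rewrite -h2 in h1.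
Qed.

Lemma L_iter (F : fieldType) (gT : finGroupType) (G : {group gT})
  (act : gT -> P1cube F -> P1cube F) (M : 'I_3 -> 'M[F]_2) (s : 'I_3 -> 'I_3) g :
  is_aut_action G act -> g \in G ->
  (forall p, act g p = [ffun i => mob (M i) (p (s i))]) ->
  forall k, exists Phi : 'I_3 -> option F -> option F,
    forall p i, act (g ^+ k)%g p i = Phi i (p (iter k s i)).
Proof.
move=> [_ [H1 HM]] Hg Hs; elim=> [|k [Phi HPhi]].
  by exists (fun _ x => x) => p i; rewrite expg0 H1.
exists (fun i x => mob (M i) (Phi (s i) x)) => p i.
by rewrite expgS HM ?groupX // Hs ffunE HPhi iterSr.
Qed.

Lemma inord1 : (inord 1 : 'I_3) = i1. Proof. by apply: val_inj; rewrite /= inordK. Qed.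
Lemma inord2 : (inord 2 : 'I_3) = i2. Proof. by apply: val_inj; rewrite /= inordK. Qed.
Lemma inord0 : (inord 0 : 'I_3) = i0. Proof. by apply: val_inj; rewrite /= inordK. Qed.



Theorem lemma5p6 (R : realType) (gT : finGroupType) (G : {group gT})
  (act : gT -> P1cube (complex R) -> P1cube (complex R)) :
  #|G| = 9%N ->
  is_aut_action G act ->
  free_outside_finite G act ->
  permutes_factors_nontrivially G act ->
  cyclic G /\
  exists g : gT, [/\ g \in G, <[g]>%g = G &
    exists (w : complex R) (N : 'I_3 -> 'M[complex R]_2),
      [/\ 3.-primitive_root w, (forall i, N i \in unitmx) &
          forall p, act g (coord_change N p) = coord_change N (model_map w p)]].
Proof.
move=> H9 Hact Hfree [g0 Hg0 [s0 [Hs0 [M0 [HM0 Hsh0]]]]].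
have [_ [Hact1 HactM]] := Hact.
have s9 : forall i, iter 9 s0 i = i.
  have [Phi HPhi] := L_iter Hact Hg0 Hsh0 9.
  by apply: (L_dep HPhi) => p; rewrite -H9 expg_cardG // Hact1.
have s3 : forall i, s0 (s0 (s0 i)) = i.
  have e9 : (s0 ^+ 9)%g = 1%g by apply/permP => i; rewrite permX perm1 s9.
  have d9 : (#[s0]%g %| 9)%N by rewrite order_dvdn e9.
  have d6 : (#[s0]%g %| 6)%N.
    by have := order_dvdG (in_setT s0); rewrite cardsT card_Sn.
  have : (#[s0]%g %| gcdn 9 6)%N by rewrite dvdn_gcd d9 d6.
  have -> : gcdn 9 6 = 3%N by [].
  rewrite order_dvdn => /eqP e3 i.
  by have := congr1 (fun s : 'S_3 => s i) e3; rewrite permX perm1.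
have nid : exists i, s0 i != i.
  case: (pickP (fun i => s0 i != i)) => [i Hi|H]; first by exists i.
  move/eqP: Hs0; case; apply/permP => i; rewrite perm1.
  by move: (H i) => /= /negbFE/eqP.
have [g [M [Hg HM Hsh]]] : exists g (M : 'I_3 -> 'M[complex R]_2),
    [/\ g \in G, forall i, M i \in unitmx &
        forall p, act g p = [ffun i => mob (M i) (p (cyc i))]].
  case: (perm3 s3 nid) => Hc.
    exists g0, M0; split=> // p; rewrite Hsh0; apply/ffunP => i.
    by rewrite !ffunE Hc.
  exists (g0 * g0)%g, (fun i => M0 i *m M0 (s0 i)); split.
  - by rewrite groupM.
  - by move=> i; rewrite unitmx_mul !HM0.
  - move=> p; rewrite HactM // !Hsh0; apply/ffunP => i.
    by rewrite !ffunE mob_comp ?HM0 // !Hc cyc3.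
have Hsh' : forall p i, act g p i = mob (M i) (p (cyc i)).
  by move=> p i; rewrite Hsh ffunE.
have g3 : forall q i, act (g ^+ 3)%g q i =
    mob (M i) (mob (M (cyc i)) (mob (M (cyc (cyc i))) (q i))).
  move=> q i; rewrite !expgS expg0 mulg1 !HactM ?groupM //.
  by rewrite !Hsh' cyc3.
have gn1 : g != 1%g.
  apply/eqP => e.
  have := L_dep (f := act g) (s := cyc) (Phi := fun i => mob (M i)) Hsh'
     (fun p => ltac:(by rewrite e Hact1)) i0.
  by rewrite cyc0 => /(congr1 val).
have g3n1 : (g ^+ 3)%g != 1%g.
  apply/eqP => e3.
  have D1 : forall t, mob (M i2) (mob (M i0) (mob (M i1) t)) = t.
    move=> t; have := g3 [ffun _ => t] i2; rewrite e3 Hact1 !ffunE cyc2 cyc0.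
    by move=> h; exact: (esym h).
  pose pt t : P1cube (complex R) := [ffun i => if i == i2 then t else
      if i == i1 then mob (M i1) t else mob (M i0) (mob (M i1) t)].
  apply: (L_fix Hfree Hg gn1 (pt := pt)).
    by move=> t t' /ffunP /(_ i2); rewrite !ffunE eqxx.
  move=> t; apply/ffunP => i; rewrite Hsh' !ffunE.
  by case: (ord3_cases i) => ->; rewrite ?cyc0 ?cyc1 ?cyc2 /= ?D1.
have o9 : #[g]%g = 9%N.
  have d9 : (#[g]%g %| 9)%N by rewrite -H9 order_dvdG.
  have n3 : ~~ (#[g]%g %| 3)%N by rewrite order_dvdn.
  have := dvdn_leq (isT : (0 < 9)%N) d9.
  move: (#[g]%g) d9 n3 => n.
  by do 10 (case: n => [|n] //).
have Gg : <[g]>%g = G.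
  by apply/eqP; rewrite eqEcard cycle_subG Hg /= -orderE o9 H9 leqnn.
split; first by rewrite -Gg cycle_cyclic.
exists g; split => //.
pose D := M i2 *m (M i0 *m M i1).
have uDm : D \in unitmx by rewrite /D !unitmx_mul !HM.
have Dm : forall t, mob D t = mob (M i2) (mob (M i0) (mob (M i1) t)).
  by move=> t; rewrite /D -mob_comp ?unitmx_mul ?HM // -mob_comp ?HM.
have D3' : forall t, mob D (mob D (mob D t)) = t.
  move=> t; rewrite !Dm.
  have e9 : (g ^+ 9 = g ^+ 3 * (g ^+ 3 * g ^+ 3))%g by rewrite -!expgD.
  have h9 : act (g ^+ 9)%g [ffun _ => t] i2 = t.
    by rewrite (_ : (g ^+ 9)%g = 1%g) ?Hact1 ?ffunE // -o9 expg_order.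
  rewrite e9 !HactM ?groupM ?groupX // !Hsh' ffunE in h9.
  move: h9; do ?[rewrite cyc0|rewrite cyc1|rewrite cyc2] => h9.
  exact: h9.
have nidD : ~ (forall t, mob D t = t).
  move=> idD.
  have inj i : injective (mob (M i)) := mob_inj (HM i).
  have c2 : forall t, mob (M i2) (mob (M i0) (mob (M i1) t)) = t.
    by move=> t; rewrite -Dm idD.
  have c0 : forall t, mob (M i0) (mob (M i1) (mob (M i2) t)) = t.
    by move=> t; apply: (inj i2); rewrite c2.
  have c1 : forall t, mob (M i1) (mob (M i2) (mob (M i0) t)) = t.
    by move=> t; apply: (inj i0); rewrite c0.
  apply: (L_fix Hfree (groupX 3 Hg) g3n1 (pt := fun t => [ffun _ => t])).
    by move=> t t' /ffunP /(_ i0); rewrite !ffunE.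
  move=> t; apply/ffunP => i; rewrite g3 !ffunE.
  by case: (ord3_cases i) => ->; do ?[rewrite cyc0|rewrite cyc1|rewrite cyc2]; rewrite ?c0 ?c1 ?c2.
have [w [P [Hw uP HP]]] := eigen3 uDm D3' nidD.
exists w, (fun i => if i == i2 then P else if i == i1 then M i1 *m P else M i0 *m (M i1 *m P)).
split => //.
  by move=> i; case: (ord3_cases i) => ->; rewrite /= ?unitmx_mul ?HM ?uP.
move=> p; apply/ffunP => i; rewrite Hsh' /coord_change /model_map !ffunE.
case: (ord3_cases i) => ->; rewrite ?cyc0 ?cyc1 ?cyc2 ?ffunE /= ?inord0 ?inord1 ?inord2.
- by rewrite mob_comp // unitmx_mul HM uP.
- by rewrite mob_comp // uP.
- rewrite -mob_comp ?unitmx_mul ?HM ?uP // -mob_comp ?HM ?uP // -Dm.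
  exact: HP.
Qed.
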